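(* Let $M\ge 2$, $\gamma_r\ge 0$ and $K>0$, and let $p_r(i)=i^{-\gamma_r}/\sum_{j=1}^M j^{-\gamma_r}$. Put $b=\gamma_r/K$, and suppose $b\le[M\log M-\log(M!)]^{-1}$. Then the maximizer of $$\sum_{i=1}^M p_r(i)\big(1-e^{-K p_c(i)}\big)$$ over probability vectors $(p_c(1),\dots,p_c(M))$ is $$p_c(i)=a_i+b\log\Big(\frac{i+1}{i}\Big),\qquad a_i=\frac1M+\frac bM\sum_{j=1}^M\log\Big(\frac{j}{i+1}\Big),\qquad i=1,\dots,M.$$ Equivalently, $p_c(i)=\frac1M+\frac bM\sum_{j=1}^M\log(j/i)$, and these values are nonnegative and sum to $1$. In the application, $K=\frac{\pi\lambda_t\beta({\rm T},4)}{\sqrt{\mu{\rm T}\sigma^2}}$, so that $b=\frac{\sqrt{\mu{\rm T}\sigma^2}\,\gamma_r}{\pi\lambda_t\beta({\rm T},4)}$.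
   Context: The objective is an approximation of the sequential density of successful receptions for Rayleigh fading, arbitrary noise $\sigma^2>0$ and path loss exponent $\alpha=4$. It is obtained by replacing the Gaussian tail function in $$p_{\rm cov}({\rm T},\lambda_t p_c(i),4)=\frac{\sqrt{2\pi}}{\beta({\rm T},4)}\,x\,{\rm Q}(x)e^{x^2/2},\qquad x=\frac{\pi\lambda_t p_c(i)\beta({\rm T},4)}{\sqrt{2\mu{\rm T}\sigma^2}},$$ with the approximation ${\rm Q}(x)\approx\frac{(1-e^{-1.4x})e^{-x^2/2}}{1.135\sqrt{2\pi}\,x}$. This gives $$p_{\rm cov}\approx\frac{1}{1.135\,\beta({\rm T},4)}\Big(1-e^{-\pi\lambda_t p_c(i)\beta({\rm T},4)/\sqrt{\mu{\rm T}\sigma^2}}\Big).$$ Here $\lambda_t$ is the transmitter intensity, $\beta({\rm T},4)=1+\sqrt{\rm T}\arctan\sqrt{\rm T}$, $1/\mu$ is the transmit power, and $p_r$ and $p_c$ are the request and caching probability mass functions over $M$ files. *)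

(* Defs.v *)
From Stdlib Require Import Reals Lra.
Open Scope R_scope.

Definition sum1 (M : nat) (g : nat -> R) : R :=
  sum_f_R0 (fun k => g (S k)) (pred M).

Definition p_r (M : nat) (gr : R) (i : nat) : R :=
  Rpower (INR i) (- gr) / sum1 M (fun j => Rpower (INR j) (- gr)).

Definition objective (M : nat) (gr K : R) (pc : nat -> R) : R :=
  sum1 M (fun i => p_r M gr i * (1 - exp (- K * pc i))).

Definition prob_vec (M : nat) (pc : nat -> R) : Prop :=
  (forall i, (1 <= i <= M)%nat -> 0 <= pc i) /\ sum1 M pc = 1.

Definition a_coef (M : nat) (b : R) (i : nat) : R :=
  1 / INR M + b / INR M * sum1 M (fun j => ln (INR j / INR (S i))).

Definition pc_opt (M : nat) (b : R) (i : nat) : R :=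
  a_coef M b i + b * ln (INR (S i) / INR i).

(* Main.v *)
Require Import Defs.
From Stdlib Require Import Reals Arith Factorial Lra Lia.
Open Scope R_scope.

Lemma sum_nonneg_restr (f : nat -> R) (n : nat) :
  (forall k, (k <= n)%nat -> 0 <= f k) -> 0 <= sum_f_R0 f n.
Proof.
  induction n as [|n IH]; intros H; simpl.
  - apply H; lia.
  - assert (0 <= sum_f_R0 f n) by (apply IH; intros; apply H; lia).
    assert (0 <= f (S n)) by (apply H; lia). lra.
Qed.

Lemma sum_pos_restr (f : nat -> R) (n : nat) :
  (forall k, (k <= n)%nat -> 0 < f k) -> 0 < sum_f_R0 f n.
Proof.
  induction n as [|n IH]; intros H; simpl.
  - apply H; lia.
  - assert (0 < sum_f_R0 f n) by (apply IH; intros; apply H; lia).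
    assert (0 < f (S n)) by (apply H; lia). lra.
Qed.

Lemma sum_nonneg_zero (f : nat -> R) (n : nat) :
  (forall k, (k <= n)%nat -> 0 <= f k) -> sum_f_R0 f n = 0 ->
  forall k, (k <= n)%nat -> f k = 0.
Proof.
  induction n as [|n IH]; intros H Hs k Hk; simpl in Hs.
  - replace k with 0%nat by lia. exact Hs.
  - assert (0 <= sum_f_R0 f n) by (apply sum_nonneg_restr; intros; apply H; lia).
    assert (0 <= f (S n)) by (apply H; lia).
    destruct (Nat.eq_dec k (S n)) as [->|Hne]; [lra|].
    apply IH; [intros; apply H; lia | lra | lia].
Qed.

Lemma sum_ln_fact (n : nat) :
  sum_f_R0 (fun k => ln (INR (S k))) n = ln (INR (fact (S n))).
Proof.
  induction n as [|n IH].
  - simpl. reflexivity.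
  - rewrite tech5, IH.
    replace (fact (S (S n))) with (S (S n) * fact (S n))%nat by reflexivity.
    rewrite mult_INR, ln_mult; [ring| |].
    + apply lt_0_INR; lia.
    + apply lt_0_INR, lt_O_fact.
Qed.

Lemma ln_div' (x y : R) : 0 < x -> 0 < y -> ln (x / y) = ln x - ln y.
Proof. intros. unfold Rdiv. rewrite ln_mult, ln_Rinv; try lra. apply Rinv_0_lt_compat; lra. Qed.

Lemma INR_S_pos (k : nat) : 0 < INR (S k).
Proof. apply lt_0_INR; lia. Qed.

Theorem lemma7 (M : nat) (gr K : R) :
  (2 <= M)%nat -> 0 <= gr -> 0 < K ->
  gr / K <= / (INR M * ln (INR M) - ln (INR (fact M))) ->
  let b := gr / K in
  (* equivalent closed form *)
  (forall i, (1 <= i <= M)%nat ->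
     pc_opt M b i = 1 / INR M + b / INR M * sum1 M (fun j => ln (INR j / INR i))) /\
  (* the values are nonnegative and sum to 1 *)
  prob_vec M (pc_opt M b) /\
  (* it maximizes the objective over probability vectors *)
  (forall pc, prob_vec M pc -> objective M gr K pc <= objective M gr K (pc_opt M b)) /\
  (* and it is the (unique) maximizer *)
  (forall pc, prob_vec M pc -> objective M gr K pc = objective M gr K (pc_opt M b) ->
     forall i, (1 <= i <= M)%nat -> pc i = pc_opt M b i).
Proof.
  intros HM Hgr HK Hb b.
  assert (Kb : K * b = gr) by (unfold b; field; lra).
  assert (b0 : 0 <= b) by (unfold b; apply Rle_mult_inv_pos; lra).
  destruct M as [|n]; [lia|].
  set (M := S n) in *.
  assert (HMpos : 0 < INR M) by (apply lt_0_INR; unfold M; lia).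
  set (L := sum1 M (fun j => ln (INR j))).
  assert (HL : L = ln (INR (fact M))) by (unfold L, sum1, M; simpl pred; apply sum_ln_fact).
  assert (Hlndiv : forall a, 0 < a -> sum1 M (fun j => ln (INR j / a)) = L - INR M * ln a).
  { intros a Ha. unfold L, sum1. simpl pred.
    rewrite (sum_eq _ (fun k => ln (INR (S k)) - ln a)).
    - rewrite minus_sum, sum_cte. unfold M. ring.
    - intros k _. apply ln_div'; [apply INR_S_pos | exact Ha]. }
  set (c := 1 / INR M + b / INR M * L).
  assert (Hx : forall i, (1 <= i)%nat -> pc_opt M b i = c - b * ln (INR i)).
  { intros i Hi. unfold pc_opt, a_coef, c.
    rewrite Hlndiv by apply INR_S_pos.
    rewrite ln_div' by (try apply INR_S_pos; apply lt_0_INR; lia).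
    field. lra. }
  assert (Hsumx : sum1 M (pc_opt M b) = 1).
  { unfold sum1. rewrite (sum_eq _ (fun k => c - ln (INR (S k)) * b)).
    - rewrite minus_sum, sum_cte, <- scal_sum.
      change (sum_f_R0 (fun k => ln (INR (S k))) (pred M)) with L.
      replace (S (Init.Nat.pred M)) with M by (unfold M; reflexivity). unfold c. field. lra.
    - intros k _. rewrite Hx by lia. ring. }
  split.
  { intros i Hi. rewrite Hx by lia. rewrite Hlndiv by (apply lt_0_INR; lia).
    unfold c. field. lra. }
  assert (Hpv : prob_vec M (pc_opt M b)).
  { split; [|exact Hsumx].
    intros i Hi. rewrite Hx by lia.
    assert (Hln : ln (INR i) <= ln (INR M)).
    { destruct (Nat.eq_dec i M) as [->|Hne]; [lra|].
      left. apply ln_increasing; [apply lt_0_INR; lia| apply lt_INR; lia]. }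
    assert (HbD : b * (INR M * ln (INR M) - L) <= 1).
    { destruct (Rle_dec (INR M * ln (INR M) - L) 0) as [Hd|Hd].
      - nra.
      - rewrite HL in *. apply Rnot_le_lt in Hd.
        apply Rmult_le_compat_r with (r := INR M * ln (INR M) - ln (INR (fact M))) in Hb; [|lra].
        fold b in Hb. rewrite Rinv_l in Hb; lra. }
    assert (c - b * ln (INR M) = (1 - b * (INR M * ln (INR M) - L)) / INR M)
      by (unfold c; field; lra).
    assert (0 <= (1 - b * (INR M * ln (INR M) - L)) / INR M)
      by (apply Rle_mult_inv_pos; lra).
    nra. }
  split; [exact Hpv|].
  set (S0 := sum1 M (fun j => Rpower (INR j) (- gr))).
  assert (HS0 : 0 < S0).
  { unfold S0, sum1. apply sum_pos_restr. intros. unfold Rpower. apply exp_pos. }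
  set (nu := K * exp (- K * c) / S0).
  set (x := pc_opt M b).
  set (G := fun (y : nat -> R) (i : nat) =>
             p_r M gr i * exp (- K * x i) *
             (exp (- K * (y i - x i)) - 1 - (- K * (y i - x i)))).
  assert (Hpe : forall i, (1 <= i)%nat -> p_r M gr i * exp (- K * x i) = exp (- K * c) / S0).
  { intros i Hi. unfold x. rewrite Hx by exact Hi. unfold p_r. fold S0. unfold Rpower.
    unfold Rdiv. rewrite Rmult_assoc, (Rmult_comm (/ S0)), <- Rmult_assoc, <- exp_plus.
    f_equal. f_equal. rewrite <- Kb. ring. }
  assert (Hppos : forall i, (1 <= i)%nat -> 0 < p_r M gr i * exp (- K * x i)).
  { intros i Hi. rewrite Hpe by exact Hi. apply Rdiv_lt_0_compat; [apply exp_pos|exact HS0]. }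
  assert (HG : forall y i, (1 <= i)%nat ->
     G y i = p_r M gr i * (1 - exp (- K * x i)) + (y i - x i) * nu
             - p_r M gr i * (1 - exp (- K * y i))).
  { intros y i Hi. unfold G.
    replace (exp (- K * y i)) with (exp (- K * x i) * exp (- K * (y i - x i)))
      by (rewrite <- exp_plus; f_equal; ring).
    replace nu with (K * (p_r M gr i * exp (- K * x i)))
      by (unfold nu; rewrite (Hpe i Hi); field; lra).
    ring. }
  assert (HGnn : forall y i, (1 <= i)%nat -> 0 <= G y i).
  { intros y i Hi. unfold G. apply Rmult_le_pos; [left; apply Hppos; exact Hi|].
    pose proof (exp_ineq1_le (- K * (y i - x i))). lra. }
  assert (HsumG : forall y, prob_vec M y ->
            sum1 M (G y) = objective M gr K x - objective M gr K y).
  { intros y [_ Hy1]. unfold sum1 in *. unfold objective, sum1.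
    rewrite (sum_eq _ (fun k =>
       (p_r M gr (S k) * (1 - exp (- K * x (S k))) + (y (S k) - x (S k)) * nu)
       - p_r M gr (S k) * (1 - exp (- K * y (S k))))).
    - rewrite minus_sum, plus_sum, <- scal_sum, minus_sum.
      unfold x in *. rewrite Hy1. unfold sum1 in Hsumx. rewrite Hsumx. ring.
    - intros k _. apply HG. lia. }
  split.
  { intros y Hy. pose proof (HsumG y Hy).
    assert (0 <= sum1 M (G y)).
    { unfold sum1. apply sum_nonneg_restr. intros. apply HGnn. lia. }
    fold x. lra. }
  intros y Hy Heq i Hi.
  pose proof (HsumG y Hy) as Hs. fold x in Heq. rewrite Heq in Hs.
  replace (objective M gr K x - objective M gr K x) with 0 in Hs by ring.
  unfold sum1 in Hs.
  assert (HG0 := sum_nonneg_zero _ _ (fun k _ => HGnn y (S k) ltac:(lia)) Hs (pred i) ltac:(unfold M in *; simpl; lia)).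
  unfold G in HG0. replace (S (pred i)) with i in HG0 by lia. apply Rmult_integral in HG0. destruct HG0 as [H0|H0].
  - pose proof (Hppos i (proj1 Hi)). lra.
  - fold x. destruct (Req_dec (- K * (y i - x i)) 0) as [Ht|Ht].
    + nra.
    + pose proof (exp_ineq1 _ Ht). lra.
Qed.
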